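(* Let $X$ be a locally compact Hausdorff space. The category $\mathsf{Point}_X$ of pointed extensions of $X$ has the following properties: it is a poset; it admits small colimits, in particular it has an initial object; it admits small limits, in particular it has a final object; and products distribute over small colimits.
   Context: A pointed extension $X_\ast$ of $X$ is a compactly generated Hausdorff topology on the underlying set of $\ast\amalg X$ extending the given topology on $X$. $\mathsf{Point}_X$ is the full subcategory of the undercategory $\mathrm{Top}^{X_+/}$ (where $X_+$ is $X$ with a disjoint basepoint) consisting of the pointed extensions of $X$. *)

(* Defs.v *)
From HB Require Import structures.
From mathcomp Require Import all_boot all_order.
From mathcomp Require Import boolp classical_sets functions cardinality topology.
From Stdlib Require Import ProofIrrelevance.
Set Implicit Arguments. Unset Strict Implicit. Unset Printing Implicit Defensive.
Local Open Scope classical_set_scope.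

Record category := Category {
  Obj :> Type;
  Hom : Obj -> Obj -> Type;
  idm : forall a, Hom a a;
  comp : forall x y z, Hom y z -> Hom x y -> Hom x z;
  comp_idl : forall a b (f : Hom a b), comp (idm b) f = f;
  comp_idr : forall a b (f : Hom a b), comp f (idm a) = f;
  compA : forall a b c d (f : Hom a b) (g : Hom b c) (h : Hom c d),
      comp h (comp g f) = comp (comp h g) f }.

Arguments Hom {_} _ _.
Arguments idm {_} _.
Arguments comp {_ _ _ _} _ _.

Record functor (J C : category) := Functor {
  fobj :> J -> C;
  fmap : forall j k, Hom j k -> Hom (fobj j) (fobj k);
  fmap_id : forall j, fmap (idm j) = idm (fobj j);
  fmap_comp : forall j k l (u : Hom j k) (v : Hom k l),
      fmap (comp v u) = comp (fmap v) (fmap u) }.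

Arguments fmap {J C} f {j k}.

Definition is_poset (C : category) : Prop :=
  (forall (a b : C) (f g : Hom a b), f = g) /\
  (forall (a b : C), Hom a b -> Hom b a -> a = b).

(* Colimits/limits of a diagram given by its object and morphism maps
   (the functor laws play no role in the universal property). *)
Definition is_cocone (J C : category) (D : J -> C)
    (Dm : forall j k, Hom j k -> Hom (D j) (D k))
    (c : C) (lam : forall j, Hom (D j) c) : Prop :=
  forall j k (u : Hom j k), comp (lam k) (Dm j k u) = lam j.

Definition is_colimit_data (J C : category) (D : J -> C)
    (Dm : forall j k, Hom j k -> Hom (D j) (D k))
    (c : C) (lam : forall j, Hom (D j) c) : Prop :=
  is_cocone Dm lam /\
  forall (c' : C) (lam' : forall j, Hom (D j) c'), is_cocone Dm lam' ->
    exists m : Hom c c', (forall j, comp m (lam j) = lam' j) /\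
      forall m' : Hom c c', (forall j, comp m' (lam j) = lam' j) -> m' = m.

Definition is_cone (J C : category) (D : J -> C)
    (Dm : forall j k, Hom j k -> Hom (D j) (D k))
    (c : C) (lam : forall j, Hom c (D j)) : Prop :=
  forall j k (u : Hom j k), comp (Dm j k u) (lam j) = lam k.

Definition is_limit_data (J C : category) (D : J -> C)
    (Dm : forall j k, Hom j k -> Hom (D j) (D k))
    (c : C) (lam : forall j, Hom c (D j)) : Prop :=
  is_cone Dm lam /\
  forall (c' : C) (lam' : forall j, Hom c' (D j)), is_cone Dm lam' ->
    exists m : Hom c' c, (forall j, comp (lam j) m = lam' j) /\
      forall m' : Hom c' c, (forall j, comp (lam j) m' = lam' j) -> m' = m.

Definition is_colimit (J C : category) (D : functor J C) (c : C) (lam : forall j, Hom (D j) c) :=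
  is_colimit_data (fun j k (u : Hom j k) => fmap D u) lam.
Definition is_limit (J C : category) (D : functor J C) (c : C) (lam : forall j, Hom c (D j)) :=
  is_limit_data (fun j k (u : Hom j k) => fmap D u) lam.

Arguments is_colimit {J C} D c lam.
Arguments is_limit {J C} D c lam.

(* Small = indexed by a category living in the universe of [category]. *)
Definition has_small_colimits (C : category) : Prop :=
  forall (J : category) (D : functor J C),
    exists (c : C) (lam : forall j, Hom (D j) c), is_colimit D c lam.

Definition has_small_limits (C : category) : Prop :=
  forall (J : category) (D : functor J C),
    exists (c : C) (lam : forall j, Hom c (D j)), is_limit D c lam.

Definition is_initial (C : category) (i : C) : Prop :=
  forall a : C, exists f : Hom i a, forall g : Hom i a, g = f.
Definition is_terminal (C : category) (t : C) : Prop :=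
  forall a : C, exists f : Hom a t, forall g : Hom a t, g = f.

Definition is_product (C : category) (a b p : C)
    (p1 : Hom p a) (p2 : Hom p b) : Prop :=
  forall (q : C) (f : Hom q a) (g : Hom q b),
    exists h : Hom q p, (comp p1 h = f /\ comp p2 h = g) /\
      forall h' : Hom q p, comp p1 h' = f /\ comp p2 h' = g -> h' = h.

(* Concretely: given a colimit
   (c, lam) of D, a product a x c, products a x D j, the induced maps
   id x D(u) : a x D j -> a x D k and id x lam j : a x D j -> a x c,
   the latter form a colimit of the former diagram. *)
Definition products_distribute_over_colimits (C : category) : Prop :=
  forall (a : C) (J : category) (D : functor J C)
    (c : C) (lam : forall j, Hom (D j) c), is_colimit D c lam ->
  forall (P : J -> C) (p1 : forall j, Hom (P j) a) (p2 : forall j, Hom (P j) (D j)),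
    (forall j, is_product (p1 j) (p2 j)) ->
  forall (Pc : C) (q1 : Hom Pc a) (q2 : Hom Pc c), is_product q1 q2 ->
  forall (Pm : forall j k, Hom j k -> Hom (P j) (P k)),
    (forall j k (u : Hom j k),
        comp (p1 k) (Pm j k u) = p1 j /\
        comp (p2 k) (Pm j k u) = comp (fmap D u) (p2 j)) ->
  forall (mu : forall j, Hom (P j) Pc),
    (forall j, comp q1 (mu j) = p1 j /\ comp q2 (mu j) = comp (lam j) (p2 j)) ->
  is_colimit_data Pm mu.

Section ExplicitTopology.
Variable T : Type.
Implicit Types (tau : set (set T)).

Definition is_topology tau : Prop :=
  tau set0 /\ tau setT /\
  (forall U V, tau U -> tau V -> tau (U `&` V)) /\
  (forall (F : set (set T)), F `<=` tau -> tau (\bigcup_(U in F) U)).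

Definition t_closed tau (A : set T) : Prop := tau (~` A).

Definition t_compact tau (K : set T) : Prop :=
  forall (F : set (set T)), F `<=` tau -> K `<=` \bigcup_(U in F) U ->
    exists G : set (set T), [/\ G `<=` F, finite_set G & K `<=` \bigcup_(U in G) U].

Definition t_hausdorff tau : Prop :=
  forall x y : T, x <> y ->
    exists U V, [/\ tau U, tau V, U x, V y & U `&` V = set0].

Definition t_compactly_generated tau : Prop :=
  forall A : set T,
    (forall K, t_compact tau K -> exists C, t_closed tau C /\ A `&` K = C `&` K) ->
    t_closed tau A.

Definition t_cgh tau : Prop :=
  [/\ is_topology tau, t_hausdorff tau & t_compactly_generated tau].

End ExplicitTopology.

Definition t_continuous (S T : Type) (sig : set (set S)) (tau : set (set T))
    (f : S -> T) : Prop :=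
  forall V, tau V -> sig (f @^-1` V).

Section PointX.
Variable X : topologicalType.

(* The underlying set of * ⊔ X is [option X], with * = None and the
   inclusion X -> * ⊔ X given by Some.  A pointed extension is a CGH
   topology on it whose subspace topology on X is the given one. *)
Definition is_pointed_extension (tau : set (set (option X))) : Prop :=
  t_cgh tau /\
  forall U : set X, open U <-> exists V, tau V /\ U = Some @^-1` V.

Record pext := PExt {
  pext_top : set (set (option X));
  pext_ax : is_pointed_extension pext_top }.

(* The structure map X_+ -> X_* of an object of the undercategory
   Top^{X_+/}: the identity of the underlying set [option X]. *)
Definition plus_to_pext : option X -> option X := id.

Definition pext_hom (A B : pext) : Type :=
  {f : option X -> option X |
     t_continuous (pext_top A) (pext_top B) f /\
     forall z, f (plus_to_pext z) = plus_to_pext z}.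

Lemma pext_hom_eq (A B : pext) (f g : pext_hom A B) :
  proj1_sig f = proj1_sig g -> f = g.
Proof.
case: f g => f hf [g hg] /= e; subst g; by rewrite (proof_irrelevance _ hf hg).
Qed.

Definition pext_id (A : pext) : pext_hom A A.
Proof. exists id; split=> // V hV; by []. Defined.

Lemma pext_comp_ax (A B C : pext) (g : pext_hom B C) (f : pext_hom A B) :
  t_continuous (pext_top A) (pext_top C) (proj1_sig g \o proj1_sig f) /\
  forall z, (proj1_sig g \o proj1_sig f) (plus_to_pext z) = plus_to_pext z.
Proof.
case: f => f [cf hf]; case: g => g [cg hg] /=.
split; first by move=> V hV; exact: (cf _ (cg _ hV)).
by move=> z /=; rewrite hf hg.
Qed.

Definition pext_comp (A B C : pext) (g : pext_hom B C) (f : pext_hom A B) :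
  pext_hom A C := exist _ (proj1_sig g \o proj1_sig f) (pext_comp_ax g f).

Definition Point : category.
Proof.
refine (@Category pext pext_hom pext_id pext_comp _ _ _);
  by move=> *; apply: pext_hom_eq.
Defined.

End PointX.

(* Main.v *)
Require Import Defs.
From mathcomp Require Import all_boot all_order.
From mathcomp Require Import boolp classical_sets functions cardinality topology.
From HB Require Import structures.
From mathcomp Require Import finmap.
From Stdlib Require Import ProofIrrelevance.
Set Implicit Arguments. Unset Strict Implicit. Unset Printing Implicit Defensive.
Local Open Scope classical_set_scope.

Lemma fin_ind T (P : set T -> Prop) : P set0 ->
  (forall A x, finite_set A -> P A -> P (x |` A)) ->
  forall A, finite_set A -> P A.
Proof.
move=> P0 PS A /finite_setP [n]; elim: n A => [A|n IH A].
  by rewrite II0 card_eq0 => /eqP ->.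
move=> /eq_cardSP [x Ax HA]; rewrite -(setD1K Ax); apply: PS.
  by apply/finite_setP; exists n.
exact: IH.
Qed.

Lemma finite_choice A B (P : set A) (R : A -> B -> Prop) : finite_set P ->
  (forall a, P a -> exists b, R a b) ->
  exists Q : set B, [/\ finite_set Q, (forall b, Q b -> exists2 a, P a & R a b)
     & (forall a, P a -> exists2 b, Q b & R a b)].
Proof.
move=> fP; move: P fP; apply: fin_ind.
  by move=> _; exists set0; split => // a [].
move=> P x fP IH H.
have [|Q [fQ H1 H2]] := IH; first by move=> a Pa; apply: H; right.
have [b0 Rb0] := H x (or_introl erefl).
exists (b0 |` Q); split.
- by rewrite finite_setU; split => //; exact: finite_set1.
- move=> b [->|Qb]; first by exists x => //; left.
  by have [a Pa Rab] := H1 _ Qb; exists a => //; right.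
- move=> a [->|Pa]; first by exists b0 => //; left.
  by have [b Qb Rab] := H2 _ Pa; exists b => //; right.
Qed.

Section TopLemmas.
Variable T : Type.
Implicit Types (tau sig : set (set T)) (K A : set T).

Lemma t_compact_mono sig tau K : (forall V, sig V -> tau V) ->
  t_compact tau K -> t_compact sig K.
Proof.
move=> st cK F Fs KF; have [G [GF fG KG]] := cK F (fun V FV => st _ (Fs _ FV)) KF.
by exists G.
Qed.

Lemma t_compact_closedI tau K A : t_closed tau A -> t_compact tau K ->
  t_compact tau (K `&` A).
Proof.
move=> cA cK F Ft KF.
have H1 : ~` A |` F `<=` tau by move=> V [->|FV]; [exact: cA | exact: Ft].
have H2 : K `<=` \bigcup_(U in ~` A |` F) U.
  move=> x Kx; have [Ax|nAx] := pselect (A x).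
    by have [V FV Vx] := KF x (conj Kx Ax); exists V => //; right.
  by exists (~` A) => //; left.
have [G [GF fG KG]] := cK _ H1 H2.
exists (G `&` F); split.
- by move=> V [].
- exact: finite_setIl.
- move=> x [Kx Ax]; have [V GV Vx] := KG x Kx.
  have /GF [VA|FV] := GV; first by rewrite VA in Vx.
  by exists V.
Qed.

Lemma t_compact_closed tau K : is_topology tau -> t_hausdorff tau ->
  t_compact tau K -> t_closed tau K.
Proof.
move=> [t0 [tT [tI tU]]] hT cK.
rewrite /t_closed; pose F' := [set W | tau W /\ W `<=` ~` K].
suff -> : ~` K = \bigcup_(W in F') W.
  by rewrite /t_closed; apply: tU => W [].
rewrite eqEsubset; split; last by move=> x [W [_ WK] Wx]; exact: WK.
move=> x nKx.
pose F := [set V | tau V /\ exists U, [/\ tau U, U x & U `&` V = set0]].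
have H1 : F `<=` tau by move=> V [].
have H2 : K `<=` \bigcup_(U in F) U.
  move=> y Ky; have xy : x <> y by move=> e; rewrite e in nKx.
  have [U [V [tU' tV Ux Vy UV]]] := hT x y xy.
  by exists V => //; split => //; exists U.
have [G [GF fG KG]] := cK _ H1 H2.
suff [W [tW Wx WG]] : exists W, [/\ tau W, W x & W `&` \bigcup_(V in G) V = set0].
  exists W => //; split => // z Wz Kz.
  have [V GV Vz] := KG z Kz.
  have : (W `&` \bigcup_(V in G) V) z by split => //; exists V.
  by rewrite WG.
move: G fG GF {KG}; apply: fin_ind.
  by move=> _; exists setT; split => //; rewrite bigcup_set0 setI0.
move=> G V fG IH GF.
have [|W [tW Wx WG]] := IH; first by move=> V' GV'; apply: GF; right.
have [_ [U [tU' Ux UV]]] := GF V (or_introl erefl).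
exists (W `&` U); split => //; first exact: tI.
rewrite bigcup_setU1 setIUr setU_eq0; split.
  by rewrite -setIA UV setI0.
by rewrite setIAC WG set0I.
Qed.

End TopLemmas.

Definition pX (X : topologicalType) (x : X) : Type := X.
HB.instance Definition _ (X : topologicalType) (x : X) := Topological.on (@pX X x).
HB.instance Definition _ (X : topologicalType) (x : X) := isPointed.Build (@pX X x) x.

Section XLemmas.
Variable X : topologicalType.

Notation tc := (t_compact (@open X)).

Lemma is_top_open : is_topology (@open X).
Proof.
split; first exact: open0. split; first exact: openT.
split; first by move=> U V; exact: openI.
by move=> F FO; apply: bigcup_open.
Qed.

Lemma t_closed_openE (A : set X) : t_closed (@open X) A = closed A.
Proof. by rewrite /t_closed openC. Qed.

Lemma compact_tc (S : set X) : compact S -> tc S.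
Proof.
move=> cS F Fo SF.
have [->|/set0P [x Sx]] := eqVneq S set0.
  by exists set0; split; [move=> ? [] | exact: finite_set0 | move=> ? []].
have := @compact_cover (@pX X x); move=> /(congr1 (fun f => f S)) E.
have cS' : @cover_compact (@pX X x) S by rewrite -E.
have [D' sD SD] := cS' (set X) F id Fo SF.
exists [set` D']; split.
- move=> V /= VD; by have /set_mem := sD V VD.
- exact: finite_fset.
- by move=> y /SD [V VD Vy]; exists V.
Qed.

Lemma open_local (D : set X) :
  (forall x, D x -> exists U, [/\ open U, U x & U `<=` D]) -> open D.
Proof.
move=> H.
have -> : D = \bigcup_(U in [set U | open U /\ U `<=` D]) U.
  rewrite eqEsubset; split; last by move=> x [U [_ UD] Ux]; exact: UD.
  by move=> x Dx; have [U [oU Ux UD]] := H x Dx; exists U.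
by apply: bigcup_open => U [].
Qed.

Hypothesis hT2 : hausdorff_space X.
Hypothesis hlc : locally_compact [set: X].

Lemma t_haus_open : t_hausdorff (@open X).
Proof.
move=> x y xy; move: hT2; rewrite open_hausdorff => /(_ x y).
have /[swap]/[apply] : x != y by apply/eqP.
move=> [[U V] /= [xU yV] [oU oV /eqP UV]].
by exists U, V; split => //; [move: xU | move: yV] => /set_mem.
Qed.

Lemma tc_closed (S : set X) : tc S -> closed S.
Proof.
by move=> cS; rewrite -t_closed_openE; apply: t_compact_closed => //;
  [exact: is_top_open | exact: t_haus_open].
Qed.

Lemma tc_closedI (S A : set X) : tc S -> closed A -> tc (S `&` A).
Proof. by move=> cS cA; apply: t_compact_closedI => //; rewrite t_closed_openE. Qed.

Lemma lc_nbhd (x : X) : exists B K, [/\ open B, B x, B `<=` K, closed K & tc K].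
Proof.
have := hlc (I : setT x); rewrite withinET => -[K nK [cK clK]].
move: nK; rewrite nbhsE => -[B [oB Bx] BK].
by exists B, K; split => //; exact: compact_tc.
Qed.

Definition ext_ok (tau : set (set (option X))) :=
  (forall U, open U -> tau (Some @` U)) /\
  (forall V, tau V -> open (Some @^-1` V)).

Lemma pre_img (S : set X) : Some @^-1` (Some @` S) = S.
Proof.
by rewrite eqEsubset; split => [x /= [y Sy [<-]]|x Sx] //=; exists x.
Qed.

Lemma transfer_fw tau (S : set X) : ext_ok tau -> tc S ->
  t_compact tau (Some @` S).
Proof.
move=> [eo ep] cS F Ft SF.
have H1 : [set Some @^-1` V | V in F] `<=` @open X.
  by move=> _ [V FV <-]; apply: ep; apply: Ft.
have H2 : S `<=` \bigcup_(U in [set Some @^-1` V | V in F]) U.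
  move=> x Sx; have [V FV Vx] := SF (Some x) (ex_intro2 _ _ x Sx erefl).
  by exists (Some @^-1` V) => //; exists V.
have [G [GF fG SG]] := cS _ H1 H2.
have [Q [fQ Q1 Q2]] := @finite_choice _ _ _
   (fun (W : set X) (V : set (option X)) => F V /\ W = Some @^-1` V) fG
   (fun W GW => let: ex_intro2 V FV e := GF W GW in ex_intro _ V (conj FV (esym e))).
exists Q; split => //.
- by move=> V /Q1 [W _ []].
- move=> _ [x Sx <-]; have [W GW Wx] := SG x Sx.
  have [V QV [_ e]] := Q2 W GW; exists V => //; by rewrite e in Wx.
Qed.

Lemma transfer_bw tau (S : set X) : ext_ok tau ->
  t_compact tau (Some @` S) -> tc S.
Proof.
move=> [eo ep] cS F Fo SF.
have H1 : [set Some @` U | U in F] `<=` tau.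
  by move=> _ [U FU <-]; apply: eo; apply: Fo.
have H2 : Some @` S `<=` \bigcup_(V in [set Some @` U | U in F]) V.
  move=> _ [x Sx <-]; have [U FU Ux] := SF x Sx.
  by exists (Some @` U); [exists U | exists x].
have [G [GF fG SG]] := cS _ H1 H2.
exists [set U | F U /\ G (Some @` U)]; split.
- by move=> U [].
- apply: (sub_finite_set (B := [set Some @^-1` V | V in G])); last exact: finite_image.
  by move=> U [FU GU]; exists (Some @` U) => //; rewrite pre_img.
- move=> x Sx; have [V GV Vx] := SG (Some x) (ex_intro2 _ _ x Sx erefl).
  have [U FU eV] := GF V GV; subst V.
  exists U; first by split.
  by move: Vx => [y Uy [<-]].
Qed.

End XLemmas.

Lemma t_compactU T (tau : set (set T)) A B : t_compact tau A -> t_compact tau B ->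
  t_compact tau (A `|` B).
Proof.
move=> cA cB F Ft ABF.
have [G1 [G1F fG1 AG1]] := cA F Ft (fun x Ax => ABF x (or_introl Ax)).
have [G2 [G2F fG2 BG2]] := cB F Ft (fun x Bx => ABF x (or_intror Bx)).
exists (G1 `|` G2); split.
- by move=> V [/G1F|/G2F].
- by rewrite finite_setU.
- move=> x [/AG1 [V GV Vx]|/BG2 [V GV Vx]]; exists V => //; by [left|right].
Qed.

Lemma pre_imgC (X : Type) (S : set X) : Some @^-1` (~` (Some @` S)) = ~` S.
Proof.
rewrite eqEsubset; split => x /= h.
  by move=> Sx; apply: h; exists x.
by move=> [y Sy [e]]; subst y; apply: h.
Qed.

Section PextLemmas.
Variable X : topologicalType.
Hypothesis hT2 : hausdorff_space X.
Hypothesis hlc : locally_compact [set: X].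
Notation tc := (t_compact (@open X)).

Lemma Xopen_pext (tau : set (set (option X))) : is_topology tau -> t_hausdorff tau ->
  tau (~` [set None]).
Proof.
move=> [_ [_ [_ tU]]] hT.
have -> : ~` [set None] = \bigcup_(U in [set U | tau U /\ ~ U None]) U.
  rewrite eqEsubset; split; last by move=> x [U [_ nU] Ux] xN; rewrite xN in Ux.
  move=> x xN; have xN' : x <> None by [].
  have [U [V [tU' tV Ux VN UV]]] := hT x None xN'.
  exists U => //; split => // UN.
  by have : (U `&` V) None by []; rewrite UV.
by apply: tU => U [].
Qed.

Lemma pext_ext (B : pext X) : ext_ok (pext_top B).
Proof.
case: B => tau [[tT hT _] ext] /=; split; last first.
  by move=> V tV; apply/ext; exists V.
move=> U /ext [V [tV ->]].
have -> : Some @` (Some @^-1` V) = V `&` ~` [set None].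
  rewrite eqEsubset; split; first by move=> _ [x Vx <-].
  by move=> [x|] [Vx nN]; [exists x | exfalso; apply: nN].
have := Xopen_pext tT hT; case: tT => [_ [_ [tI _]]] XN; exact: tI.
Qed.

Lemma img_closed (tau : set (set (option X))) (S : set X) :
  is_topology tau -> t_hausdorff tau -> ext_ok tau -> tc S -> tau (~` (Some @` S)).
Proof.
move=> tT hT eo cS; apply: t_compact_closed => //; exact: transfer_fw.
Qed.

Lemma pext_img_closed (B : pext X) (S : set X) : tc S -> pext_top B (~` (Some @` S)).
Proof.
case: B (pext_ext B) => tau [[tT hT _] ext] /= eo; exact: img_closed.
Qed.

Lemma haus_opt (tau : set (set (option X))) :
  ext_ok tau -> (forall K, tc K -> tau (~` (Some @` K))) -> t_hausdorff tau.
Proof.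
move=> [eo ep] hK.
have sepN : forall a, exists U V, [/\ tau U, tau V, U (Some a), V None & U `&` V = set0].
  move=> a; have [B [K [oB Ba BK cK tK]]] := lc_nbhd hlc a.
  exists (Some @` B), (~` (Some @` K)); split.
  - exact: eo.
  - exact: hK.
  - by exists a.
  - by move=> [].
  - by rewrite -subset0 => _ [[x Bx <-] /=]; apply; exists x => //; apply: BK.
move=> [a|] [b|] ab.
- have ab' : a <> b by move=> e; apply: ab; rewrite e.
  have [U [V [oU oV Ua Vb UV]]] := t_haus_open hT2 ab'.
  exists (Some @` U), (Some @` V); split; try exact: eo; [by exists a|by exists b|].
  rewrite -subset0 => _ [[x Ux <-] [y Vy [e]]]; subst y.
  by have : (U `&` V) x by []; rewrite UV.
- exact: sepN.
- have [U [V [tU tV Ub VN UV]]] := sepN b.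
  by exists V, U; split => //; rewrite setIC.
- by exfalso; apply: ab.
Qed.

Definition GL (Lf : set (set X)) (C : set X) :=
  closed C /\ forall L, Lf L -> tc (C `&` L).

Definition topL (Lf : set (set X)) : set (set (option X)) :=
  fun V => open (Some @^-1` V) /\ (V None -> GL Lf (~` (Some @^-1` V))).

Variable Lf : set (set X).
Hypothesis hLf : forall L, Lf L -> closed L.

Lemma GL_sub C D : GL Lf C -> closed D -> D `<=` C -> GL Lf D.
Proof.
move=> [cC HC] cD DC; split => // L LL.
have -> : D `&` L = (C `&` L) `&` D.
  by rewrite eqEsubset; split => x; [move=> [Dx Lx]; split => //; split => //; exact: DC | move=> [[]]].
exact: tc_closedI (HC L LL) cD.
Qed.

Lemma GL_U C D : GL Lf C -> GL Lf D -> GL Lf (C `|` D).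
Proof.
move=> [cC HC] [cD HD]; split; first exact: closedU.
by move=> L LL; rewrite setIUl; apply: t_compactU; [exact: HC | exact: HD].
Qed.

Lemma GL_tc K : tc K -> GL Lf K.
Proof.
move=> cK; split; first exact: (tc_closed hT2 cK).
by move=> L /hLf cL; exact: (tc_closedI cK cL).
Qed.

Lemma topL_top : is_topology (topL Lf).
Proof.
split; first by split => //; rewrite preimage_set0; exact: open0.
split; first by split; [rewrite preimage_setT; exact: openT | move=> _; rewrite preimage_setT setCT; apply: GL_tc => F _ _; exists set0; split; [move=> ? [] | exact: finite_set0 | move=> ? []]].
split.
  move=> U V [oU HU] [oV HV]; split; first by rewrite preimage_setI; exact: openI.
  move=> [UN VN]; rewrite preimage_setI setCI; exact: GL_U (HU UN) (HV VN).
move=> F Ft; split; first by rewrite preimage_bigcup; apply: bigcup_open => V /Ft [].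
move=> [V0 FV0 V0N]; have [oV0 HV0] := Ft V0 FV0.
apply: (GL_sub (HV0 V0N)).
  by rewrite closedC preimage_bigcup; apply: bigcup_open => V /Ft [].
by move=> x nx V0x; apply: nx; exists V0.
Qed.

Lemma topL_ext : ext_ok (topL Lf).
Proof.
split; last by move=> V [].
move=> U oU; split; first by rewrite pre_img.
by move=> [].
Qed.

Lemma topL_haus : t_hausdorff (topL Lf).
Proof.
apply: (@haus_opt (topL Lf) topL_ext).
move=> K cK; split.
  by rewrite pre_imgC openC; exact: (tc_closed hT2 cK).
move=> _; rewrite pre_imgC setCK; exact: GL_tc.
Qed.

Lemma topL_cpt L : Lf L -> t_compact (topL Lf) (None |` (Some @` L)).
Proof.
move=> LL F Ft KF.
have [U0 FU0 U0N] := KF None (or_introl erefl).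
have [oU0 HU0] := Ft U0 FU0; have [_ HC0] := HU0 U0N.
have cC0 := HC0 L LL.
have H1 : [set Some @^-1` V | V in F] `<=` @open X.
  by move=> _ [V FV <-]; have [] := Ft V FV.
have H2 : ~` (Some @^-1` U0) `&` L `<=` \bigcup_(U in [set Some @^-1` V | V in F]) U.
  move=> x [_ Lx]; have [V FV Vx] := KF (Some x) (or_intror (ex_intro2 _ _ x Lx erefl)).
  by exists (Some @^-1` V) => //; exists V.
have [G [GF fG SG]] := cC0 _ H1 H2.
have [Q [fQ Q1 Q2]] := @finite_choice _ _ _
   (fun (W : set X) (V : set (option X)) => F V /\ W = Some @^-1` V) fG
   (fun W GW => let: ex_intro2 V FV e := GF W GW in ex_intro _ V (conj FV (esym e))).
exists (U0 |` Q); split.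
- by move=> V [->|/Q1 [W _ []]].
- by rewrite finite_setU; split => //; exact: finite_set1.
- move=> _ [->|[x Lx <-]]; first by exists U0 => //; left.
  have [U0x|nU0x] := pselect (U0 (Some x)); first by exists U0 => //; left.
  have [W GW Wx] := SG x (conj nU0x Lx).
  have [V QV [_ e]] := Q2 W GW; exists V; first by right.
  by rewrite e in Wx.
Qed.

Lemma topL_cg : t_compactly_generated (topL Lf).
Proof.
move=> A H.
have eo := topL_ext.
have clA : closed (Some @^-1` A).
  rewrite -openC; apply: open_local => x nAx.
  have [B [K [oB Bx BK cK tK]]] := lc_nbhd hlc x.
  have [C [tC AC]] := H _ (transfer_fw eo tK).
  have oC : open (~` (Some @^-1` C)) by have [] := tC; rewrite preimage_setC.
  exists (B `&` ~` (Some @^-1` C)); split.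
  - exact: openI.
  - split => // Cx; apply: nAx.
    have : (C `&` (Some @` K)) (Some x) by split => //; exists x => //; exact: BK.
    by rewrite -AC => -[].
  - move=> y [By nCy] Ay; apply: nCy.
    have : (A `&` (Some @` K)) (Some y) by split => //; exists y => //; exact: BK.
    by rewrite AC => -[].
split; first by rewrite preimage_setC openC.
move=> nAN; rewrite preimage_setC setCK; split => // L LL.
have [C [tC AC]] := H _ (topL_cpt LL).
have nCN : ~ C None.
  move=> CN; apply: nAN.
  have : (C `&` (None |` Some @` L)) None by split => //; left.
  by rewrite -AC => -[].
have [_ HC] := tC; have [_] := HC nCN.
move=> /(_ L LL); rewrite preimage_setC setCK.
have -> // : Some @^-1` C `&` L = Some @^-1` A `&` L.
rewrite eqEsubset; split => y [h Ly]; split => //.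
  have : (C `&` (None |` Some @` L)) (Some y) by split => //; right; exists y.
  by rewrite -AC => -[].
have : (A `&` (None |` Some @` L)) (Some y) by split => //; right; exists y.
by rewrite AC => -[].
Qed.

Lemma topL_pext : is_pointed_extension (topL Lf).
Proof.
split; first by split; [exact: topL_top | exact: topL_haus | exact: topL_cg].
move=> U; split.
  by move=> oU; exists (Some @` U); split; [exact: topL_ext.1 | rewrite pre_img].
by move=> [V [[oV _] ->]].
Qed.

End PextLemmas.

Section Cat.
Variable X : topologicalType.

Lemma hom_incl (A B : pext X) (f : pext_hom A B) V :
  pext_top B V -> pext_top A V.
Proof.
case: f => f [cf hf] BV.
have ef : f = id by apply: funext => z; exact: (hf z).
by have := cf V BV; rewrite ef.
Qed.

Definition incl_hom (A B : pext X) (H : forall V, pext_top B V -> pext_top A V) :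
  pext_hom A B := exist _ id (conj H (fun z => erefl)).

Lemma hom_uniq (A B : pext X) (f g : pext_hom A B) : f = g.
Proof.
case: f => f [cf hf]; case: g => g [cg hg]; apply: pext_hom_eq => /=.
by apply: funext => z; rewrite (hf z) (hg z).
Qed.

Lemma pext_eq (A B : pext X) : (forall V, pext_top A V <-> pext_top B V) -> A = B.
Proof.
case: A => tA hA; case: B => tB hB /= H.
have e : tA = tB by apply: funext => V; apply: propext; exact: H.
subst tB; by rewrite (proof_irrelevance _ hA hB).
Qed.

Lemma pt_top (B : pext X) : is_topology (pext_top B).
Proof. by case: B => ? [[]]. Qed.
Lemma pt_haus (B : pext X) : t_hausdorff (pext_top B).
Proof. by case: B => ? [[]]. Qed.
Lemma pt_cg (B : pext X) : t_compactly_generated (pext_top B).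
Proof. by case: B => ? [[]]. Qed.

Hypothesis hT2 : hausdorff_space X.
Hypothesis hlc : locally_compact [set: X].

Definition init : pext X :=
  @PExt X (topL (@set0 (set X))) (topL_pext hT2 hlc (fun L (h : set0 L) => match h with end)).

Lemma init_finest (B : pext X) V : pext_top B V -> pext_top init V.
Proof.
move=> BV; have [eo ep] := pext_ext B; split; first exact: ep.
move=> _; split; last by move=> L [].
by rewrite closedC; exact: ep.
Qed.

Definition topS (P : pext X -> Prop) : set (set (option X)) :=
  fun V => forall B : pext X, (B = init \/ P B) -> pext_top B V.

Lemma topS_pext P : is_pointed_extension (topS P).
Proof.
have eo : ext_ok (topS P).
  split; first by move=> U oU B _; exact: (pext_ext B).1.
  by move=> V SV; exact: (pext_ext init).2 (SV init (or_introl erefl)).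
split; last first.
  move=> U; split; first by move=> oU; exists (Some @` U); split; [exact: eo.1 | rewrite pre_img].
  by move=> [V [SV ->]]; exact: eo.2.
split.
- split; first by move=> B _; have [] := pt_top B.
  split; first by move=> B _; have [_ []] := pt_top B.
  split; first by move=> U V SU SV B hB; have [_ [_ [tI _]]] := pt_top B; apply: tI; [exact: SU | exact: SV].
  by move=> F FS B hB; have [_ [_ [_ tU]]] := pt_top B; apply: tU => V FV; exact: FS.
- apply: (haus_opt hT2 hlc eo) => K cK B _; exact: pext_img_closed.
- move=> A H B hB; suff : t_closed (pext_top B) A by [].
  apply: pt_cg => K cK.
  have [C [SC AC]] := H K (t_compact_mono (fun V SV => SV B hB) cK).
  by exists C; split => //; exact: SC.
Qed.

Definition Sobj P : pext X := PExt (topS_pext P).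

Lemma Sobj_le P (B : pext X) : P B -> forall V, pext_top (Sobj P) V -> pext_top B V.
Proof. by move=> PB V SV; apply: SV; right. Qed.

Lemma Sobj_ge P (B : pext X) : (forall B', P B' -> forall V, pext_top B V -> pext_top B' V) ->
  forall V, pext_top B V -> pext_top (Sobj P) V.
Proof.
move=> H V BV B' [->|PB']; first exact: init_finest BV.
exact: H.
Qed.

End Cat.

Section Distr.
Variable X : topologicalType.
Hypothesis hT2 : hausdorff_space X.
Hypothesis hlc : locally_compact [set: X].
Notation tc := (t_compact (@open X)).

Lemma imgI (K : set (option X)) (D : set X) :
  K `&` (Some @` D) = Some @` (Some @^-1` K `&` D).
Proof.
rewrite eqEsubset; split.
  by move=> x [Kx [y Dy e]]; subst x; exists y.
by move=> _ [y [Ky Dy] <-]; split => //; exists y.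
Qed.

Lemma V_img (V : set (option X)) : ~ V None -> V = Some @` (Some @^-1` V).
Proof.
move=> nV; rewrite eqEsubset; split; last by move=> _ [y Vy <-].
by move=> [y|] Vy //; exists y.
Qed.

Lemma V_cimg (V : set (option X)) : V None -> V = ~` (Some @` (~` (Some @^-1` V))).
Proof.
move=> VN; rewrite eqEsubset; split.
  by move=> x Vx [y nVy e]; subst x; apply: nVy.
move=> [y|] h //; apply: contrapT => nVy; apply: h; by exists y.
Qed.

Lemma init_closed (S : set X) : closed S -> pext_top (init hT2 hlc) (~` (Some @` S)).
Proof.
move=> cS; split; first by rewrite pre_imgC openC.
by move=> _; rewrite pre_imgC setCK; split => // L [].
Qed.

Lemma distrib_core (I : Type) (a T : pext X) (Ds : I -> pext X) V :
 (forall W, pext_top a W -> pext_top T W) ->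
 (forall W, pext_top (Sobj hT2 hlc (fun B => exists i, B = Ds i)) W -> pext_top T W) ->
 open (Some @^-1` V) ->
 (forall i (q : pext X), (forall W, pext_top a W -> pext_top q W) ->
     (forall W, pext_top (Ds i) W -> pext_top q W) -> pext_top q V) ->
 pext_top T V.
Proof.
move=> haT hST oU Hq.
have [VN|nVN] := pselect (V None); last first.
  by rewrite (V_img nVN); exact: (pext_ext T).1.
rewrite (V_cimg VN).
set C := ~` (Some @^-1` V).
have clC : closed C by rewrite /C closedC.
suff : t_closed (pext_top T) (Some @` C) by [].
apply: pt_cg => K cK.
have [KN|nKN] := pselect (K None); last first.
  exists (~` (Some @` (Some @^-1` V))); split.
    by rewrite /t_closed setCK; exact: (pext_ext T).1.
  rewrite eqEsubset; split => -[y|] [h Ky]; try by exfalso; apply: nKN.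
  - split => //; move: h => [z Cz [e]]; subst z; by move=> [w Vw [e]]; subst w.
  - by split => //; exists y => // Vy; apply: h; exists y.
set L := Some @^-1` K.
have clL : closed L.
  have := t_compact_closed (pt_top T) (pt_haus T) cK.
  by move=> /(pext_ext T).2; rewrite preimage_setC openC.
set S := Sobj hT2 hlc (fun B => exists i, B = Ds i).
have cKS : t_compact (pext_top S) K := t_compact_mono hST cK.
have key : forall i (M : set (option X)), t_compact (pext_top (Ds i)) M -> M None ->
    tc (C `&` L `&` Some @^-1` M).
  move=> i M cM MN; set N := Some @^-1` M.
  have clN : closed N.
    have := t_compact_closed (pt_top (Ds i)) (pt_haus (Ds i)) cM.
    by move=> /(pext_ext (Ds i)).2; rewrite preimage_setC openC.
  pose Lf := fun L' : set X => [/\ closed L',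
     (forall D, pext_top a (~` (Some @` D)) -> tc (L' `&` D)) &
     (forall D, pext_top (Ds i) (~` (Some @` D)) -> tc (L' `&` D))].
  have hLf : forall L', Lf L' -> closed L' by move=> L' [].
  pose q := PExt (topL_pext hT2 hlc hLf).
  have sub : forall (B : pext X),
      (forall L', Lf L' -> forall D, pext_top B (~` (Some @` D)) -> tc (L' `&` D)) ->
      forall W, pext_top B W -> pext_top q W.
    move=> B HB W BW; have oW := (pext_ext B).2 W BW; split => // WN.
    split; first by rewrite closedC.
    move=> L' LL'; rewrite setIC; apply: HB => //.
    by rewrite -(V_cimg WN).
  have [_ HqV] : pext_top q V.
    apply: Hq; [apply: sub => L' [] _ H1 _; exact: H1 | apply: sub => L' [] _ _ H2; exact: H2].
  have [_ HG] := HqV VN.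
  rewrite -setIA; apply: HG; split.
  - exact: closedI.
  - move=> D aD.
    have cKa : t_compact (pext_top a) K := t_compact_mono haT cK.
    have := t_compact_closedI aD cKa; rewrite imgI => /(transfer_bw (pext_ext a)) cLD.
    have -> : L `&` N `&` D = (Some @^-1` K `&` D) `&` N.
      by rewrite -setIA [N `&` D]setIC setIA.
    exact: tc_closedI.
  - move=> D dD.
    have := t_compact_closedI dD cM; rewrite imgI => /(transfer_bw (pext_ext (Ds i))) cND.
    have -> : L `&` N `&` D = (Some @^-1` M `&` D) `&` L.
      by rewrite -setIA setIC.
    exact: tc_closedI.
have clS : t_closed (pext_top S) (Some @` (C `&` L)).
  move=> B [->|[i ->]].
    by apply: init_closed; exact: closedI.
  suff : t_closed (pext_top (Ds i)) (Some @` (C `&` L)) by [].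
  apply: pt_cg => M cM.
  have [MN|nMN] := pselect (M None).
    exists (Some @` (C `&` L `&` Some @^-1` M)); split.
      exact: pext_img_closed (key i M cM MN).
    rewrite [LHS]setIC [RHS]setIC !imgI; congr image; by rewrite [C `&` L `&` _]setIC [RHS]setIA setIid.
  exists (~` (Some @` (~` (C `&` L)))); split.
    by rewrite /t_closed setCK; apply: (pext_ext (Ds i)).1; rewrite openC; exact: closedI.
  rewrite eqEsubset; split => -[y|] [h My] //; split => //.
  - by move=> [z nz [e]]; subst z; move: h => [z hz [e]]; subst z.
  - by exists y => //; apply: contrapT => nh; apply: h; exists y.
have cCL : tc (C `&` L).
  have := t_compact_closedI clS cKS; rewrite imgI => /(transfer_bw (pext_ext S)).
  by rewrite setIC -setIA setIid.
exists (Some @` (C `&` L)); split; first exact: pext_img_closed cCL.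
rewrite eqEsubset; split => -[y|] [h Ky]; try by case: h => ? _ [].
- split => //; case: h => z Cz [e]; subst z; by exists y.
- split => //; case: h => z [Cz _] [e]; subst z; by exists y.
Qed.

End Distr.

Lemma homP (X : topologicalType) (a b : Point X) (f : Hom a b) V :
  pext_top b V -> pext_top a V.
Proof. exact: (@hom_incl X a b f V). Qed.

Unset Implicit Arguments.

Theorem mainTheorem9 (X : topologicalType)
    (hX_lc : locally_compact [set: X]) (hX_T2 : hausdorff_space X) :
  is_poset (Point X) /\
  (has_small_colimits (Point X) /\ exists i : Point X, is_initial i) /\
  (has_small_limits (Point X) /\ exists t : Point X, is_terminal t) /\
  products_distribute_over_colimits (Point X).
Proof.
have hT2 := hX_T2; have hlc := hX_lc.
split.
  split; first by move=> a b f g; exact: hom_uniq.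
  move=> a b f g; apply: pext_eq => V; split => h; [exact: (homP g h) | exact: (homP f h)].
have colim : forall (J : category) (D : functor J (Point X)),
    is_colimit D (Sobj hT2 hlc (fun B => exists j, B = D j))
      (fun j => incl_hom (Sobj_le (B := D j) (ex_intro _ j erefl))).
  move=> J D; split; first by move=> j k u; exact: hom_uniq.
  move=> c' lam' _.
  have H : forall V, pext_top c' V -> pext_top (Sobj hT2 hlc (fun B => exists j, B = D j)) V.
    by apply: Sobj_ge => B' [j ->] V h; exact: (homP (lam' j) h).
  exists (incl_hom H); split; [move=> j; exact: hom_uniq | move=> m' _; exact: hom_uniq].
split.
  split; first by move=> J D; eexists; eexists; exact: colim.
  exists (init hT2 hlc) => a; exists (incl_hom (@init_finest _ hT2 hlc a)).
  by move=> g; exact: hom_uniq.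
split.
  split.
    move=> J D.
    pose P := fun B : pext X => forall j V, pext_top (D j) V -> pext_top B V.
    have H : forall j V, pext_top (D j) V -> pext_top (Sobj hT2 hlc P) V.
      by move=> j; apply: Sobj_ge => B' PB' V h; exact: (PB' j V h).
    exists (Sobj hT2 hlc P), (fun j => incl_hom (H j)); split.
      by move=> j k u; exact: hom_uniq.
    move=> c' lam' _.
    have PC : P c' by move=> j V h; exact: (homP (lam' j) h).
    exists (incl_hom (Sobj_le PC)); split; [move=> j; exact: hom_uniq | move=> m' _; exact: hom_uniq].
  exists (Sobj hT2 hlc (fun _ => True)) => a.
  by exists (incl_hom (@Sobj_le _ hT2 hlc (fun _ => True) a I)) => g; exact: hom_uniq.
move=> a J D c lam Hcol P p1 p2 Hprod Pc q1 q2 Hpc Pm HPm mu Hmu.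
split; first by move=> j k u; exact: hom_uniq.
move=> c' lam' _.
have H : forall V, pext_top c' V -> pext_top Pc V.
  move=> V c'V.
  apply: (@distrib_core X hT2 hlc J a Pc (fun j => D j)).
  - by move=> W h; exact: (homP q1 h).
  - move=> W SW; apply: (homP q2).
    have [_ U] := Hcol.
    have [m _] := U _ _ (colim J D).1.
    exact: (homP m SW).
  - exact: (pext_ext c').2.
  - move=> j q ha hd.
    have [h _] := Hprod j q (incl_hom ha) (incl_hom hd).
    exact: (homP h (homP (lam' j) c'V)).
exists (incl_hom H); split; [move=> j; exact: hom_uniq | move=> m' _; exact: hom_uniq].
Qed.
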